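(* If $G$ is an appended star of order $n$, maximum degree $\Delta=3$ and diameter at least $8$, then $\gamma^{\rm ID}(G)\le \frac23 n=\left(\frac{\Delta-1}{\Delta}\right)n$.
   Context: An identifying code of a graph $G$ is a set $C\subseteq V(G)$ such that every vertex $v$ has $N[v]\cap C\neq\emptyset$ and for all distinct $u,v$, $N[u]\cap C \ne N[v]\cap C$, where $N[v]$ is the closed neighborhood; $\gamma^{\rm ID}(G)$ is its minimum size. A $k$-star is $K_{1,k}$. For a graph $G'$, a vertex $v$ of $G'$ and a star $S$, $G'\rhd_v S$ is the graph obtained from the disjoint union of $G'$ and $S$ by identifying $v$ with a leaf of $S$. An appended star is a graph $G_p$ obtained as follows: $G_0=S_0$ is a $\Delta_0$-star with $\Delta_0\ge3$, and for $i=1,\dots,p$, $G_i=G_{i-1}\rhd_{v_{i-1}}S_i$ where $S_i$ is a $\Delta_i$-star with $\Delta_i\ge 3$ and $v_{i-1}$ is a vertex of $G_{i-1}$. *)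

(* Defs.v *)
From mathcomp Require Import all_boot.
Set Implicit Arguments. Unset Strict Implicit. Unset Printing Implicit Defensive.

Section Graph.
Variables (T : finType) (adj : rel T).

Definition cnbh (v : T) : {set T} := [set u | (u == v) || adj v u].

Definition is_id_codeb (C : {set T}) : bool :=
  [forall v, cnbh v :&: C != set0] &&
  [forall u, forall v, (u != v) ==> (cnbh u :&: C != cnbh v :&: C)].

(* minimum size of an identifying code (default #|T| if none exists;
   since every code has size <= #|T| this default never makes a
   bound < #|T| hold vacuously) *)
Definition gammaID : nat :=
  \big[minn/#|T|]_(C : {set T} | is_id_codeb C) #|C|.

Definition deg (v : T) : nat := #|[set u | adj v u]|.
Definition max_degree : nat := \max_(v : T) deg v.

Fixpoint walk (k : nat) (u v : T) : bool :=
  match k with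
  | 0 => u == v
  | k'.+1 => [exists w, adj u w && walk k' w v]
  end.

(* distance: length of a shortest walk (shortest walks in a graph on
   #|T| vertices have length < #|T|); #|T| if v is unreachable from u *)
Definition dist (u v : T) : nat :=
  \big[minn/#|T|]_(k < #|T| | walk k u v) (k : nat).

Definition diameter : nat := \max_(u : T) \max_(v : T) dist u v.
End Graph.

(* Graphs are on vertex set {0,...,n-1} with adjacency a relation on nat. *)

Definition star_rel (k : nat) : rel nat :=
  fun x y => ((x == 0) && (1 <= y <= k)) || ((y == 0) && (1 <= x <= k)).

(* edges of a k-star glued to vertex v of a graph on {0..n-1}:
   centre n, leaves v (the identified leaf) and n+1, ..., n+k-1 *)
Definition attach_rel (n v k : nat) : rel nat :=
  fun x y =>
    let leaf z := (z == v) || (n < z < n + k) in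
    ((x == n) && leaf y) || ((y == n) && leaf x).

Inductive appended_star : nat -> rel nat -> Prop :=
| AppStar0 (k : nat) : 3 <= k -> appended_star k.+1 (star_rel k)
| AppStarS (n : nat) (e : rel nat) (v k : nat) :
    appended_star n e -> v < n -> 3 <= k ->
    appended_star (n + k) (fun x y => e x y || attach_rel n v k x y).

Definition ord_rel (n : nat) (e : rel nat) : rel 'I_n :=
  fun x y => e (nat_of_ord x) (nat_of_ord y).
Arguments ord_rel : clear implicits.

(* Main.v *)
Require Import Defs.
From mathcomp Require Import all_boot zify.
Set Implicit Arguments. Unset Strict Implicit. Unset Printing Implicit Defensive.

Section ParTree.
Variables (N : nat) (e : rel nat) (par : nat -> nat).
Hypothesis Hbd : forall x y, e x y -> (x < N) && (y < N).
Hypothesis Hadj : forall x y, x < N -> y < N ->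
  e x y = ((0 < x) && (par x == y)) || ((0 < y) && (par y == x)).
Hypothesis Hpar : forall x, 0 < x -> x < N -> par x < x.

Lemma pt_sym x y : e x y = e y x.
Proof.
case Exy: (e x y); case Eyx: (e y x) => //.
- have /andP[hx hy] := Hbd Exy. by rewrite Hadj // orbC -Hadj // Eyx in Exy.
- have /andP[hy hx] := Hbd Eyx. by rewrite Hadj // orbC -Hadj // Exy in Eyx.
Qed.

Lemma pt_lt x y : e x y -> y < x -> par x = y.
Proof.
move=> E lt; have /andP[hx hy] := Hbd E.
move: E; rewrite Hadj // => /orP[/andP[_ /eqP //]|/andP[h0 /eqP hp]].
have := Hpar h0 hy; lia.
Qed.

Lemma pt_neq x y : e x y -> x != y.
Proof.
move=> E; have /andP[hx hy] := Hbd E.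
move: E; rewrite Hadj // => /orP[/andP[h0 /eqP hp]|/andP[h0 /eqP hp]].
- have := Hpar h0 hx; lia.
- have := Hpar h0 hy; lia.
Qed.

Lemma exists_max (f : nat -> nat) L : 0 < L ->
  exists2 i0, i0 < L & forall i, i < L -> f i <= f i0.
Proof.
elim: L => // [[|L] IH] _.
  by exists 0 => // i; rewrite ltnS leqn0 => /eqP ->.
have [i0 hi0 hmax] := IH isT.
case: (leqP (f L.+1) (f i0)) => h.
- exists i0; first lia. move=> i; rewrite ltnS leq_eqVlt => /orP[/eqP ->//|]. exact: hmax.
- exists L.+1 => // i; rewrite ltnS leq_eqVlt => /orP[/eqP ->//|/hmax]. lia.
Qed.

Lemma no_cyc (L : nat) (f : nat -> nat) : 0 < L ->
  (forall i, i < L -> e (f i) (f i.+1)) ->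
  (forall i, i < L -> f i != f i.+2) -> f L = f 0 -> f L.+1 = f 1 -> False.
Proof.
move=> L0 He Hnb HL HL1.
have [i0 hi0 hmax] := exists_max f L0.
have Hnext : par (f i0) = f i0.+1.
  apply: pt_lt; first exact: He.
  have hle : f i0.+1 <= f i0.
    case: (ltnP i0.+1 L) => h; first exact: hmax.
    have -> : i0.+1 = L by lia. rewrite HL; exact: hmax.
  have := pt_neq (He _ hi0); rewrite eq_sym; lia.
case: i0 hi0 hmax Hnext => [|j] hj hmax Hnext.
- have E := He L.-1 ltac:(lia).
  have eL : L.-1.+1 = L by lia. rewrite eL in E.
  rewrite HL pt_sym in E.
  have hle : f L.-1 <= f 0 by apply: hmax; lia.
  have := pt_neq E; rewrite eq_sym => hne.
  have hp : par (f 0) = f L.-1 by apply: pt_lt => //; lia.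
  have := Hnb L.-1 ltac:(lia). have -> : L.-1.+2 = L.+1 by lia.
  by rewrite HL1 -Hnext -hp eqxx.
- have E := He j ltac:(lia). rewrite pt_sym in E.
  have hle : f j <= f j.+1 by apply: hmax; lia.
  have := pt_neq E; rewrite eq_sym => hne.
  have hp : par (f j.+1) = f j by apply: pt_lt => //; lia.
  have := Hnb j ltac:(lia). by rewrite -Hnext -hp eqxx.
Qed.
End ParTree.

Definition DegB (N : nat) (e : rel nat) := forall x a b c d,
  x < N -> a < N -> b < N -> c < N -> d < N ->
  e x a -> e x b -> e x c -> e x d -> uniq [:: a; b; c; d] -> False.

Record Inv (N : nat) (e : rel nat) (par : nat -> nat) (col : pred nat) (m : nat) : Prop := {
  iv_bd : forall x y, e x y -> (x < N) && (y < N);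
  iv_adj : forall x y, x < N -> y < N ->
     e x y = ((0 < x) && (par x == y)) || ((0 < y) && (par y == x));
  iv_par : forall x, 0 < x -> x < N -> par x < x;
  iv_col : forall x y, e x y -> col x != col y;
  iv_ctr : forall x, x < N -> col x ->
     exists a b c, [/\ e x a, e x b, e x c & uniq [:: a; b; c]];
  iv_cnt : count col (iota 0 N) = m;
  iv_N : N = 3 * m + 1 }.

Lemma inv_base k : 3 <= k -> DegB k.+1 (star_rel k) ->
  exists par col m, Inv k.+1 (star_rel k) par col m.
Proof.
move=> hk HD.
have k3 : k = 3.
  case: (leqP k 3) => h; first lia.
  exfalso; apply: (HD 0 1 2 3 4) => //; rewrite /star_rel /=; lia.
subst k.
exists (fun _ => 0), (fun x => x == 0), 1; split => //.
- move=> x y; rewrite /star_rel; lia.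
- move=> x y hx hy; rewrite /star_rel.
  by case: x hx => [|[|[|[|x]]]] //; case: y hy => [|[|[|[|y]]]].
- move=> x y; rewrite /star_rel => /orP[] /andP[/eqP -> h]; lia.
- move=> x hx /eqP ->; exists 1, 2, 3; split => //.
Qed.

Section Step.
Variables (n : nat) (e : rel nat) (v k : nat) (par : nat -> nat) (col : pred nat) (m : nat).
Hypothesis IV : Inv n e par col m.
Hypothesis hv : v < n.
Hypothesis hk : 3 <= k.
Let e' := fun x y => e x y || attach_rel n v k x y.
Hypothesis HD : DegB (n + k) e'.

Lemma step_k3 : k = 3.
Proof.
case: (leqP k 3) => h; first lia.
exfalso; have := HD (x:=n) (a:=v) (b:=n.+1) (c:=n.+2) (d:=n.+3).
rewrite /e' /attach_rel ?eqxx /= orbT; apply; try lia.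
rewrite !inE; lia.

Qed.

Lemma step_colv : col v = false.
Proof.
apply/negP => cv.
have [a [b [c [ea eb ec]]]] := iv_ctr IV hv cv.
move=> u.
have := iv_bd IV ea; have := iv_bd IV eb; have := iv_bd IV ec => /andP[_ hc] /andP[_ hb] /andP[_ ha].
have := HD (x:=v) (a:=a) (b:=b) (c:=c) (d:=n); rewrite /e' ?ea ?eb ?ec /attach_rel eqxx /=.
apply; try lia.
move: u; rewrite /= !inE !andbT. lia.
Qed.

Definition par' x := if x < n then par x else if x == n then v else n.
Definition col' x := if x < n then col x else x == n.

Lemma step_inv : Inv (n + k) e' par' col' m.+1.
Proof.
have k3 := step_k3. have cv := step_colv. subst k.
have bd := iv_bd IV.
split.
- move=> x y; rewrite /e' /attach_rel => /orP[/bd|]; lia.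
- move=> x y hx hy; rewrite /e' /attach_rel /par'.
  case: (ltnP x n) => hxn; case: (ltnP y n) => hyn.
  + have h1 : (x == n) = false by lia. have h2 : (y == n) = false by lia.
    by rewrite (iv_adj IV) // h1 h2 /= !orbF.
  + have -> : e x y = false by apply/negP => /bd /andP[? ?]; lia.
    have -> : (x == n) = false by lia.
    have -> : (0 < x) && (par x == y) = false.
      case: (posnP x) => // h0 /=. have := iv_par IV h0 hxn; lia.
    case: (eqVneq y n) => [->|hyn'] /=; rewrite ?eqxx ?(negbTE hyn') /=; apply/idP/idP; lia.
  + have -> : e x y = false by apply/negP => /bd /andP[? ?]; lia.
    have -> : (y == n) = false by lia.
    have -> : (0 < y) && (par y == x) = false.
      case: (posnP y) => // h0 /=. have := iv_par IV h0 hyn; lia.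
    case: (eqVneq x n) => [->|hxn'] /=; rewrite ?eqxx ?(negbTE hxn') /=; apply/idP/idP; lia.
  + have -> : e x y = false by apply/negP => /bd /andP[? ?]; lia.
    case: (eqVneq x n) => [->|hxn']; case: (eqVneq y n) => [->|hyn'] /=;
      rewrite ?eqxx ?(negbTE hxn') ?(negbTE hyn') /=; apply/idP/idP; lia.
- move=> x h0 hx; rewrite /par'; case: (ltnP x n) => h /=; first exact: (iv_par IV).
  case: (eqVneq x n) => [->|hn]; rewrite ?eqxx ?(negbTE hn); lia.
- move=> x y; rewrite /e' /attach_rel /col' => /orP[E|].
  + have /andP[hx hy] := bd _ _ E. rewrite hx hy. exact: (iv_col IV E).
  + move=> /orP[] /andP[/eqP -> /orP[/eqP ->|h]]; rewrite ?ltnn ?eqxx ?hv ?cv //.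
    * have -> : (y < n) = false by lia. lia.
    * have -> : (x < n) = false by lia. lia.
- move=> x hx; rewrite /col'; case: (ltnP x n) => h.
  + move=> cx; have [a [b [c [ea eb ec u]]]] := iv_ctr IV h cx.
    by exists a, b, c; rewrite /e' ea eb ec.
  + move=> /eqP ->; exists v, n.+1, n.+2; rewrite /e' /attach_rel eqxx /=.
    split; try lia. rewrite !inE andbT; apply/andP; split; lia.
- rewrite iotaD /= count_cat (@eq_in_count _ col' col); last first.
    by move=> x; rewrite mem_iota /col' => /andP[_ h]; rewrite h.
  rewrite (iv_cnt IV) /col' /= ltnn eqxx.
  have -> : (n.+1 < n) = false by lia. have -> : (n.+2 < n) = false by lia.
  have -> : (n.+1 == n) = false by lia. have -> : (n.+2 == n) = false by lia.
  by rewrite addn1.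
- rewrite (iv_N IV); lia.
Qed.
End Step.

Lemma DegB_mono n e v k : DegB (n + k) (fun x y => e x y || attach_rel n v k x y) ->
  (forall x y, e x y -> (x < n) && (y < n)) -> DegB n e.
Proof.
move=> HD _ x a b c d hx ha hb hc hd ea eb ec ed u.
by apply: (HD x a b c d); rewrite ?ea ?eb ?ec ?ed //; lia.
Qed.

Lemma app_bd N e : appended_star N e -> forall x y, e x y -> (x < N) && (y < N).
Proof.
elim=> [k hk|n e0 v k _ IH hv hk] x y; first by rewrite /star_rel; lia.
rewrite /attach_rel => /orP[/IH|]; lia.
Qed.

Lemma inv_app N e : appended_star N e -> DegB N e ->
  exists par col m, Inv N e par col m.
Proof.
elim=> [k hk|n e0 v k Happ IH hv hk] HD; first exact: inv_base.
have [par [col [m IV]]] := IH (DegB_mono HD (app_bd Happ)).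
exists (par' n v par), (col' n col), m.+1.
exact: step_inv.
Qed.

Section Code.
Variables (N : nat) (e : rel nat) (col : pred nat).
Hypothesis ebd : forall x y, e x y -> (x < N) && (y < N).
Hypothesis esym : forall x y, e x y = e y x.
Hypothesis ecol : forall x y, e x y -> col x != col y.
Hypothesis T1 : forall g h a b, col g -> col h -> g != h -> a != b ->
  e g a -> e g b -> e h a -> e h b -> False.
Hypothesis ctr3 : forall g, g < N -> col g ->
  exists a b c, [/\ e g a, e g b, e g c & uniq [:: a; b; c]].
Variables (c1 c2 c3 c4 x1 x2 x3 r1 w2 w3 r4 : nat).
Hypotheses (k1 : col c1) (k2 : col c2) (k3 : col c3) (k4 : col c4).
Hypotheses (E1 : e c1 x1) (E2 : e c2 x1) (E3 : e c2 x2) (E4 : e c3 x2) (E5 : e c3 x3)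
  (E6 : e c4 x3) (E7 : e c1 r1) (E8 : e c2 w2) (E9 : e c3 w3) (E10 : e c4 r4).
Hypotheses (D12 : c1 != c2) (D13 : c1 != c3) (D14 : c1 != c4) (D23 : c2 != c3)
  (D24 : c2 != c4) (D34 : c3 != c4).
Let R := [:: x2; w2; w3; r1; r4].
Let Z := [:: c1; c2; c3; c4].
Hypotheses (X1R : x1 \notin R) (X3R : x3 \notin R).
Hypotheses (N1 : ~~ e c3 w2) (N2 : ~~ e c2 w3) (N3 : ~~ e c2 r1) (N4 : ~~ e c3 r4)
  (N5 : ~~ e c2 r4) (N6 : ~~ e c3 r1) (N7 : ~~ e c1 r4).
Hypothesis Hi : forall g y y', col g -> g \notin Z -> y \in R -> y' \in R ->
  e g y -> e g y' -> y = y'.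

Definition inC z := (~~ col z && (z \notin R)) || (z \in Z).
Definition S u z := ((z == u) || e u z) && inC z.

Lemma bl x y : e x y -> x < N. Proof. by move/ebd => /andP[]. Qed.
Lemma br x y : e x y -> y < N. Proof. by move/ebd => /andP[]. Qed.

Lemma colF c x : col c -> e c x -> col x = false.
Proof. by move=> hc /ecol; rewrite hc; case: (col x). Qed.

Lemma colZ c : c \in Z -> col c.
Proof. by rewrite !inE => /or4P[] /eqP ->. Qed.

Lemma memRP y : y \in R -> y = x2 \/ y = w2 \/ y = w3 \/ y = r1 \/ y = r4.
Proof. rewrite !inE => /orP[/eqP|/orP[/eqP|/orP[/eqP|/orP[/eqP|/eqP]]]]; tauto. Qed.

Lemma colR y : y \in R -> col y = false.
Proof.
move/memRP => [->|[->|[->|[->|->]]]].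
- exact: colF k2 E3. - exact: colF k2 E8. - exact: colF k3 E9.
- exact: colF k1 E7. - exact: colF k4 E10.
Qed.

Lemma notZ y : col y = false -> y \notin Z.
Proof. by move=> hy; apply/negP => /colZ; rewrite hy. Qed.

Lemma inCZ c : c \in Z -> inC c.
Proof. by move=> h; rewrite /inC h orbT. Qed.

Lemma inCB y : col y = false -> y \notin R -> inC y.
Proof. by move=> h1 h2; rewrite /inC h1 h2. Qed.

Lemma inCR y : y \in R -> inC y = false.
Proof. move=> h; rewrite /inC h colR //=. apply/negbTE/notZ; exact: colR. Qed.

Lemma Suu u : S u u = inC u.
Proof. by rewrite /S eqxx. Qed.

Lemma ecc x y : col x -> col y -> e x y = false.
Proof. by move=> hx hy; apply/negP => /ecol; rewrite hx hy. Qed.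

Lemma eBB x y : col x = false -> col y = false -> e x y = false.
Proof. by move=> hx hy; apply/negP => /ecol; rewrite hx hy. Qed.

Lemma neq_col x y : col x != col y -> x != y.
Proof. by apply: contraNneq => ->; rewrite eqxx. Qed.

Lemma SRZ y c : y \in R -> c \in Z -> S y c = e c y.
Proof.
move=> hy hc; rewrite /S inCZ // andbT esym.
have : c != y by apply: neq_col; rewrite colZ // colR.
by move/negbTE => ->.
Qed.

Lemma mR1 : x2 \in R. Proof. by rewrite !inE eqxx. Qed.
Lemma mR2 : w2 \in R. Proof. by rewrite !inE eqxx ?orbT. Qed.
Lemma mR3 : w3 \in R. Proof. by rewrite !inE eqxx ?orbT. Qed.
Lemma mR4 : r1 \in R. Proof. by rewrite !inE eqxx ?orbT. Qed.
Lemma mR5 : r4 \in R. Proof. by rewrite !inE eqxx ?orbT. Qed.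
Lemma mZ1 : c1 \in Z. Proof. by rewrite !inE eqxx. Qed.
Lemma mZ2 : c2 \in Z. Proof. by rewrite !inE eqxx ?orbT. Qed.
Lemma mZ3 : c3 \in Z. Proof. by rewrite !inE eqxx ?orbT. Qed.
Lemma mZ4 : c4 \in Z. Proof. by rewrite !inE eqxx ?orbT. Qed.
Local Hint Resolve mR1 mR2 mR3 mR4 mR5 mZ1 mZ2 mZ3 mZ4 : core.

Lemma sepS u v : (exists2 z, z < N & S v z != S u z) -> exists2 z, z < N & S u z != S v z.
Proof. by case=> z hz h; exists z; rewrite // eq_sym. Qed.

Lemma sepZgen c x c' : c \in Z -> c' \in Z -> e c x -> e c' x -> c != c' -> x \notin R ->
  forall v, v != c -> exists2 z, z < N & S c z != S v z.
Proof.
move=> hc hc' ex ex' ncc' nx v nvc.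
have kc := colZ hc; have kc' := colZ hc'; have kx := colF kc ex.
case cv: (col v).
  exists c; first exact: bl ex.
  have nvc' : c != v by rewrite eq_sym.
  by rewrite Suu inCZ // /S ecc // orbF (negbTE nvc').
case: (eqVneq v x) => [->|hvx].
  exists c'; first exact: bl ex'.
  have ncc'' : c' != c by rewrite eq_sym.
  by rewrite /S inCZ // (negbTE ncc'') ecc // esym ex' orbT.
exists x; first exact: br ex.
have hxv : x != v by rewrite eq_sym.
by rewrite /S inCB // ex orbT eBB // orbF (negbTE hxv).
Qed.

Lemma sepZ u v : u \in Z -> v != u -> exists2 z, z < N & S u z != S v z.
Proof.
rewrite !inE => /or4P[] /eqP ->.
- by apply: (sepZgen (x:=x1) (c':=c2)).
- by apply: (sepZgen (x:=x1) (c':=c1)); rewrite // eq_sym.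
- by apply: (sepZgen (x:=x3) (c':=c4)).
- by apply: (sepZgen (x:=x3) (c':=c3)); rewrite // eq_sym.
Qed.

Lemma two_out g : g < N -> col g -> g \notin Z ->
  exists p q, [/\ e g p, e g q, p != q, p \notin R & q \notin R].
Proof.
move=> hg kg nz; have [a [b [c [ea eb ec u]]]] := ctr3 hg kg.
move: u => /=; rewrite !inE !negb_or => /and3P[/andP[hab hac] hbc _].
case ha: (a \in R).
  have hb : b \notin R by apply/negP => hb; move: hab; rewrite (Hi kg nz ha hb ea eb) eqxx.
  have hc : c \notin R by apply/negP => hc; move: hac; rewrite (Hi kg nz ha hc ea ec) eqxx.
  by exists b, c.
case hb: (b \in R).
  have hc : c \notin R by apply/negP => hc; move: hbc; rewrite (Hi kg nz hb hc eb ec) eqxx.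
  by exists a, c; rewrite ha.
by exists a, b; rewrite ha hb.
Qed.

Lemma sepG u v : u < N -> v < N -> col u -> u \notin Z -> v \notin Z -> u != v ->
  exists2 z, z < N & S u z != S v z.
Proof.
move=> hu hv ku nzu nzv nuv.
have [p [q [ep eq npq np nq]]] := two_out hu ku nzu.
have kp := colF ku ep; have kq := colF ku eq.
have Sp : S u p by rewrite /S ep orbT inCB.
have Sq : S u q by rewrite /S eq orbT inCB.
case sp: (S v p); last by exists p; [exact: br ep | rewrite Sp sp].
case sq: (S v q); last by exists q; [exact: br eq | rewrite Sq sq].
exfalso; move: sp sq; rewrite /S => /andP[sp _] /andP[sq _].
case kv: (col v).
- have hpv : (p == v) = false by apply/negbTE/neq_col; rewrite kp kv.
  have hqv : (q == v) = false by apply/negbTE/neq_col; rewrite kq kv.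
  rewrite hpv hqv /= in sp sq.
  exact: (T1 ku kv nuv npq ep eq sp sq).
- rewrite !eBB //= !orbF in sp sq.
  by move: npq; rewrite (eqP sp) (eqP sq) eqxx.
Qed.

Lemma sepR u v : u \in R -> v \in R -> u != v -> exists2 z, z < N & S u z != S v z.
Proof.
move/memRP => [->|[->|[->|[->|->]]]] /memRP [->|[->|[->|[->|->]]]] Huv; try by rewrite eqxx in Huv.
all: first
  [ by exists c1; [exact: bl E1 | rewrite !SRZ // ?E7 ?(negbTE N7)]
  | by exists c2; [exact: bl E2 | rewrite !SRZ // ?E3 ?E8 ?(negbTE N2) ?(negbTE N3) ?(negbTE N5)]
  | by exists c3; [exact: bl E4 | rewrite !SRZ // ?E4 ?E9 ?(negbTE N1) ?(negbTE N4) ?(negbTE N6)] ].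
Qed.

Lemma sepB u v : u < N -> v < N -> col u = false -> col v = false -> u != v ->
  exists2 z, z < N & S u z != S v z.
Proof.
move=> hu hv ku kv nuv.
have nvu : v != u by rewrite eq_sym.
case ru: (u \in R); case rv: (v \in R).
- exact: sepR.
- exists v => //. by rewrite Suu inCB ?rv // /S (negbTE nvu) eBB.
- exists u => //. by rewrite Suu inCB ?ru // /S (negbTE nuv) eBB.
- exists u => //. by rewrite Suu inCB ?ru // /S (negbTE nuv) eBB.
Qed.

Lemma dom u : u < N -> exists2 z, z < N & S u z.
Proof.
move=> hu.
case zu: (u \in Z); first by exists u => //; rewrite Suu inCZ.
case ku: (col u).
  have [p [q [ep _ _ np _]]] := two_out hu ku (negbT zu).
  exists p; first exact: br ep.
  by rewrite /S ep orbT inCB // (colF ku ep).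
case ru: (u \in R); last by exists u => //; rewrite Suu inCB ?ru.
move: (ru) => /memRP [eu|[eu|[eu|[eu|eu]]]]; rewrite eu in ru *.
- by exists c2; [exact: bl E2 | rewrite SRZ].
- by exists c2; [exact: bl E2 | rewrite SRZ].
- by exists c3; [exact: bl E4 | rewrite SRZ].
- by exists c1; [exact: bl E1 | rewrite SRZ].
- by exists c4; [exact: bl E6 | rewrite SRZ].
Qed.

Lemma sep u v : u < N -> v < N -> u != v -> exists2 z, z < N & S u z != S v z.
Proof.
move=> hu hv nuv.
have nvu : v != u by rewrite eq_sym.
case zu: (u \in Z); first exact: sepZ.
case zv: (v \in Z); first by apply: sepS; exact: sepZ.
case ku: (col u); first by apply: sepG; rewrite ?zu ?zv.
case kv: (col v); first by apply: sepS; apply: sepG; rewrite ?zu ?zv.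
exact: sepB.
Qed.

Lemma code_id : is_id_codeb (ord_rel N e) [set z : 'I_N | inC (val z)].
Proof.
apply/andP; split.
- apply/forallP => u; have [z hz Sz] := dom (ltn_ord u).
  apply/set0Pn; exists (Ordinal hz); rewrite !inE; exact: Sz.
- apply/forallP => u; apply/forallP => v; apply/implyP => nuv.
  have [z hz Sd] := sep (ltn_ord u) (ltn_ord v) nuv.
  apply/negP => /eqP Heq.
  have := congr1 (fun A : {set 'I_N} => Ordinal hz \in A) Heq; rewrite /= !inE => E.
  by move/negP: Sd; apply; apply/eqP; exact: E.
Qed.
End Code.

Section Walks.
Variables (T : finType) (adj : rel T).

Lemma wstep x y k z : adj x y -> walk adj k y z -> walk adj k.+1 x z.
Proof. by move=> a w; apply/existsP; exists y; rewrite a. Qed.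

Lemma wstepP k x z : walk adj k.+1 x z -> exists2 y, adj x y & walk adj k y z.
Proof. by move/existsP => [y /andP[a w]]; exists y. Qed.

Lemma walk_cat a b x y z : walk adj a x y -> walk adj b y z -> walk adj (a + b) x z.
Proof.
elim: a x => [|a IH] x /=; first by move/eqP ->.
by move/wstepP => [w h1 h2] h3; apply: (wstep h1); apply: IH h2 h3.
Qed.

Lemma walk_split a b x z : walk adj (a + b) x z -> exists y, walk adj a x y /\ walk adj b y z.
Proof.
elim: a x => [|a IH] x /=; first by move=> h; exists x; rewrite eqxx.
move/wstepP => [w h1 /IH [y [h2 h3]]]; exists y; split => //; exact: wstep h1 h2.
Qed.

Hypothesis asym : forall x y, adj x y = adj y x.

Lemma walk_sym k x y : walk adj k x y -> walk adj k y x.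
Proof.
elim: k x => [|k IH] x; first by rewrite /= eq_sym.
move/wstepP => [w h1 /IH h2].
have h3 : walk adj 1 w x by apply: (wstep (y:=x)); [rewrite asym | rewrite /= eqxx].
rewrite -addn1; exact: walk_cat h2 h3.
Qed.
End Walks.
Lemma card_count N (P : pred nat) : #|[set z : 'I_N | P (val z)]| = count P (iota 0 N).
Proof.
rewrite -sum1_card (eq_bigl (fun z : 'I_N => P (val z))); last by move=> z; rewrite inE.
by rewrite -(big_mkord P (fun _ => 1)) sum1_count /index_iota subn0.
Qed.

Lemma bigmin_le_seq (I : eqType) (r : seq I) (P : pred I) (F : I -> nat) x0 j :
  j \in r -> P j -> \big[minn/x0]_(i <- r | P i) F i <= F j.
Proof.
elim: r => // a r IH; rewrite inE big_cons => /orP[/eqP <- -> | /IH h Pj].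
  exact: geq_minl.
case: (P a); last exact: h Pj.
exact: leq_trans (geq_minr _ _) (h Pj).
Qed.

Lemma bigmin_le_def (I : eqType) (r : seq I) (P : pred I) (F : I -> nat) x0 :
  \big[minn/x0]_(i <- r | P i) F i <= x0.
Proof.
elim: r => [|a r IH]; first by rewrite big_nil.
rewrite big_cons; case: (P a) => //; exact: leq_trans (geq_minr _ _) IH.
Qed.

Lemma count_mem_sub (t s : seq nat) : uniq t -> uniq s -> {subset t <= s} ->
  count (mem t) s = size t.
Proof.
move=> ut us sub; rewrite -size_filter; apply: perm_size; apply: uniq_perm.
- exact: filter_uniq.
- exact: ut.
- move=> x; rewrite mem_filter; apply/andP/idP => [[]//|h]; split => //; exact: sub.
Qed.

Lemma degB_of n e : max_degree (ord_rel n e) <= 3 -> DegB n e.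
Proof.
move=> Hmax x a b c d hx ha hb hc hd ea eb ec ed u.
have := leq_trans (leq_bigmax (F := deg (ord_rel n e)) (Ordinal hx)) Hmax.
rewrite /deg.
set s := [:: Ordinal ha; Ordinal hb; Ordinal hc; Ordinal hd].
have us : uniq s by rewrite -(map_inj_uniq val_inj).
have : #|s| <= #|[set y | ord_rel n e (Ordinal hx) y]|.
  apply: subset_leq_card; apply/subsetP => y; rewrite !inE /ord_rel /=.
  by move=> /orP[/eqP->|/orP[/eqP->|/orP[/eqP->|/eqP->]]].
by rewrite (card_uniqP us) /=; lia.
Qed.

Section Main.
Variables (N : nat) (e : rel nat) (par : nat -> nat) (col : pred nat) (m : nat).
Hypothesis IV : Inv N e par col m.

Lemma mesym x y : e x y = e y x.
Proof. exact: (pt_sym (iv_bd IV) (iv_adj IV)). Qed.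

Ltac sf := first [ done | by rewrite mesym | by rewrite eq_sym ].

Lemma cyc4 a b c d : e a b -> e b c -> e c d -> e d a -> a != c -> b != d -> False.
Proof.
move=> *; apply: (no_cyc (iv_bd IV) (iv_adj IV) (iv_par IV) (L:=4)
  (f:=nth 0 [:: a;b;c;d;a;b])) => //.
- by case=> [|[|[|[|i]]]].
- by case=> [|[|[|[|i]]]] //= _; sf.
Qed.

Lemma cyc6 a b c d f g : e a b -> e b c -> e c d -> e d f -> e f g -> e g a ->
  a != c -> b != d -> c != f -> d != g -> f != a -> g != b -> False.
Proof.
move=> *; apply: (no_cyc (iv_bd IV) (iv_adj IV) (iv_par IV) (L:=6)
  (f:=nth 0 [:: a;b;c;d;f;g;a;b])) => //.
- by case=> [|[|[|[|[|[|i]]]]]].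
- by case=> [|[|[|[|[|[|i]]]]]] //= _; sf.
Qed.

Lemma cyc8 a b c d f g h i : e a b -> e b c -> e c d -> e d f -> e f g -> e g h ->
  e h i -> e i a ->
  a != c -> b != d -> c != f -> d != g -> f != h -> g != i -> h != a -> i != b -> False.
Proof.
move=> *; apply: (no_cyc (iv_bd IV) (iv_adj IV) (iv_par IV) (L:=8)
  (f:=nth 0 [:: a;b;c;d;f;g;h;i;a;b])) => //.
- by case=> [|[|[|[|[|[|[|[|j]]]]]]]].
- by case=> [|[|[|[|[|[|[|[|j]]]]]]]] //= _; sf.
Qed.

Lemma cyc10 a b c d f g h i j k : e a b -> e b c -> e c d -> e d f -> e f g -> e g h ->
  e h i -> e i j -> e j k -> e k a ->
  a != c -> b != d -> c != f -> d != g -> f != h -> g != i -> h != j -> i != k ->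
  j != a -> k != b -> False.
Proof.
move=> *; apply: (no_cyc (iv_bd IV) (iv_adj IV) (iv_par IV) (L:=10)
  (f:=nth 0 [:: a;b;c;d;f;g;h;i;j;k;a;b])) => //.
- by case=> [|[|[|[|[|[|[|[|[|[|l]]]]]]]]]].
- by case=> [|[|[|[|[|[|[|[|[|[|l]]]]]]]]]] //= _; sf.
Qed.


Lemma T1m g h a b : col g -> col h -> g != h -> a != b ->
  e g a -> e g b -> e h a -> e h b -> False.
Proof. move=> _ _ ngh nab ga gb ha hb; apply: (cyc4 ga _ hb); sf. Qed.

Lemma mcolF c x : col c -> e c x -> col x = false.
Proof. by move=> hc /(iv_col IV); rewrite hc; case: (col x). Qed.

Lemma mcolT x c : col x = false -> e x c -> col c.
Proof. by move=> hx /(iv_col IV); rewrite hx; case: (col c). Qed.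

Lemma pick g z1 z2 : g < N -> col g -> exists w, [/\ e g w, w != z1 & w != z2].
Proof.
move=> hg kg; have [a [b [c [ea eb ec u]]]] := iv_ctr IV hg kg.
move: u => /=; rewrite !inE !negb_or => /and3P[/andP[hab hac] hbc _].
case h1: ((a != z1) && (a != z2)); first by case/andP: h1 => *; exists a.
case h2: ((b != z1) && (b != z2)); first by case/andP: h2 => *; exists b.
exists c; split => //; lia.
Qed.


Lemma pattern_bound c1 x1 c2 x2 c3 x3 c4 :
  col c1 -> e c1 x1 -> e x1 c2 -> e c2 x2 -> e x2 c3 -> e c3 x3 -> e x3 c4 ->
  c1 != c2 -> x1 != x2 -> c2 != c3 -> x2 != x3 -> c3 != c4 ->
  3 * gammaID (ord_rel N e) <= 2 * N.
Proof.
move=> k1 P1 P2 P3 P4 P5 P6 n12 nx12 n23 nx23 n34.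
have E1 := P1. have E2 : e c2 x1 by rewrite mesym. have E3 := P3.
have E4 : e c3 x2 by rewrite mesym. have E5 := P5. have E6 : e c4 x3 by rewrite mesym.
have kx1 := mcolF k1 E1. have k2 := mcolT kx1 P2. have kx2 := mcolF k2 E3.
have k3 := mcolT kx2 P4. have kx3 := mcolF k3 E5. have k4 := mcolT kx3 P6.
have bnd : forall x y, e x y -> x < N by move=> x y /(iv_bd IV) /andP[].
have [r1 [E7 nr1 _]] := pick x1 x1 (bnd _ _ E1) k1.
have [w2 [E8 nw21 nw22]] := pick x1 x2 (bnd _ _ E3) k2.
have [w3 [E9 nw32 nw33]] := pick x2 x3 (bnd _ _ E5) k3.
have [r4 [E10 nr4 _]] := pick x3 x3 (bnd _ _ E6) k4.
have a13 : x1 != x3.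
  by apply/eqP => h; subst x3; apply: (cyc4 (a:=x1) (b:=c2) (c:=x2) (d:=c3)); sf.
have b13 : c1 != c3.
  by apply/eqP => h; subst c3; apply: (cyc4 (a:=c1) (b:=x1) (c:=c2) (d:=x2)); sf.
have b24 : c2 != c4.
  by apply/eqP => h; subst c4; apply: (cyc4 (a:=c2) (b:=x2) (c:=c3) (d:=x3)); sf.
have b14 : c1 != c4.
  by apply/eqP => h; subst c4;
  apply: (cyc6 (a:=c1) (b:=x1) (c:=c2) (d:=x2) (f:=c3) (g:=x3)); sf.
have e1 : x1 != w3.
  by apply/eqP => h; subst w3; apply: (cyc4 (a:=x1) (b:=c2) (c:=x2) (d:=c3)); sf.
have f1 : x1 != r4.
  by apply/eqP => h; subst r4;
  apply: (cyc6 (a:=x1) (b:=c2) (c:=x2) (d:=c3) (f:=x3) (g:=c4)); sf.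
have g1 : x3 != w2.
  by apply/eqP => h; subst w2; apply: (cyc4 (a:=c2) (b:=x2) (c:=c3) (d:=x3)); sf.
have h1 : x3 != r1.
  by apply/eqP => h; subst r1;
  apply: (cyc6 (a:=c1) (b:=x1) (c:=c2) (d:=x2) (f:=c3) (g:=x3)); sf.
have n1 : ~~ e c3 w2.
  by apply/negP => h; apply: (cyc4 (a:=c2) (b:=x2) (c:=c3) (d:=w2)); sf.
have n2 : ~~ e c2 w3.
  by apply/negP => h; apply: (cyc4 (a:=c3) (b:=x2) (c:=c2) (d:=w3)); sf.
have n3 : ~~ e c2 r1.
  by apply/negP => h; apply: (cyc4 (a:=c1) (b:=x1) (c:=c2) (d:=r1)); sf.
have n4 : ~~ e c3 r4.
  by apply/negP => h; apply: (cyc4 (a:=c4) (b:=x3) (c:=c3) (d:=r4)); sf.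
have x2r4 : x2 != r4.
  by apply/eqP => h; subst r4; apply: (cyc4 (a:=x2) (b:=c3) (c:=x3) (d:=c4)); sf.
have x2r1 : x2 != r1.
  by apply/eqP => h; subst r1; apply: (cyc4 (a:=c1) (b:=x1) (c:=c2) (d:=x2)); sf.
have n5 : ~~ e c2 r4.
  by apply/negP => h; apply: (cyc6 (a:=c2) (b:=x2) (c:=c3) (d:=x3) (f:=c4) (g:=r4)); sf.
have n6 : ~~ e c3 r1.
  by apply/negP => h; apply: (cyc6 (a:=c3) (b:=x2) (c:=c2) (d:=x1) (f:=c1) (g:=r1)); sf.
have n7 : ~~ e c1 r4.
  by apply/negP => h;
  apply: (cyc8 (a:=c1) (b:=x1) (c:=c2) (d:=x2) (f:=c3) (g:=x3) (h:=c4) (i:=r4)); sf.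
have d23 : w2 != w3 by apply/eqP => h; subst w3; rewrite E8 in n2.
have d2r1 : w2 != r1 by apply/eqP => h; subst r1; rewrite E8 in n3.
have d2r4 : w2 != r4 by apply/eqP => h; subst r4; rewrite E8 in n5.
have d3r1 : w3 != r1 by apply/eqP => h; subst r1; rewrite E9 in n6.
have d3r4 : w3 != r4 by apply/eqP => h; subst r4; rewrite E9 in n4.
have drr : r1 != r4 by apply/eqP => h; subst r4; rewrite E7 in n7.
have X1R : x1 \notin [:: x2; w2; w3; r1; r4] by clear -nx12 nw21 e1 nr1 f1; rewrite !inE; lia.
have X3R : x3 \notin [:: x2; w2; w3; r1; r4] by clear -nx23 g1 nw33 h1 nr4; rewrite !inE; lia.
have hHi : forall g y y', col g -> g \notin [:: c1; c2; c3; c4] ->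
    y \in [:: x2; w2; w3; r1; r4] -> y' \in [:: x2; w2; w3; r1; r4] ->
    e g y -> e g y' -> y = y'.
  move=> g y y' kg gZ yR y'R ey ey'.
  case: (eqVneq y y') => // nyy'; exfalso.
  have g1' : g != c1 by clear -gZ; move: gZ; rewrite !inE; lia.
  have g2' : g != c2 by clear -gZ; move: gZ; rewrite !inE; lia.
  have g3' : g != c3 by clear -gZ; move: gZ; rewrite !inE; lia.
  have g4' : g != c4 by clear -gZ; move: gZ; rewrite !inE; lia.
  move: yR y'R ey ey' nyy'; rewrite !inE.
  move=> /orP[/eqP->|/orP[/eqP->|/orP[/eqP->|/orP[/eqP->|/eqP->]]]]
         /orP[/eqP->|/orP[/eqP->|/orP[/eqP->|/orP[/eqP->|/eqP->]]]] ey ey' nyy';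
  [ by rewrite eqxx in nyy'
  | by apply: (cyc4 (a:=g) (b:=x2) (c:=c2) (d:=w2)); sf
  | by apply: (cyc4 (a:=g) (b:=x2) (c:=c3) (d:=w3)); sf
  | by apply: (cyc6 (a:=g) (b:=x2) (c:=c2) (d:=x1) (f:=c1) (g:=r1)); sf
  | by apply: (cyc6 (a:=g) (b:=x2) (c:=c3) (d:=x3) (f:=c4) (g:=r4)); sf
  | by apply: (cyc4 (a:=g) (b:=x2) (c:=c2) (d:=w2)); sf
  | by rewrite eqxx in nyy'
  | by apply: (cyc6 (a:=g) (b:=w2) (c:=c2) (d:=x2) (f:=c3) (g:=w3)); sf
  | by apply: (cyc6 (a:=g) (b:=w2) (c:=c2) (d:=x1) (f:=c1) (g:=r1)); sf
  | by apply: (cyc8 (a:=g) (b:=w2) (c:=c2) (d:=x2) (f:=c3) (g:=x3) (h:=c4) (i:=r4)); sf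
  | by apply: (cyc4 (a:=g) (b:=x2) (c:=c3) (d:=w3)); sf
  | by apply: (cyc6 (a:=g) (b:=w2) (c:=c2) (d:=x2) (f:=c3) (g:=w3)); sf
  | by rewrite eqxx in nyy'
  | by apply: (cyc8 (a:=g) (b:=w3) (c:=c3) (d:=x2) (f:=c2) (g:=x1) (h:=c1) (i:=r1)); sf
  | by apply: (cyc6 (a:=g) (b:=w3) (c:=c3) (d:=x3) (f:=c4) (g:=r4)); sf
  | by apply: (cyc6 (a:=g) (b:=x2) (c:=c2) (d:=x1) (f:=c1) (g:=r1)); sf
  | by apply: (cyc6 (a:=g) (b:=w2) (c:=c2) (d:=x1) (f:=c1) (g:=r1)); sf
  | by apply: (cyc8 (a:=g) (b:=w3) (c:=c3) (d:=x2) (f:=c2) (g:=x1) (h:=c1) (i:=r1)); sf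
  | by rewrite eqxx in nyy'
  | by apply: (cyc10 (a:=g) (b:=r1) (c:=c1) (d:=x1) (f:=c2) (g:=x2) (h:=c3) (i:=x3) (j:=c4) (k:=r4)); sf
  | by apply: (cyc6 (a:=g) (b:=x2) (c:=c3) (d:=x3) (f:=c4) (g:=r4)); sf
  | by apply: (cyc8 (a:=g) (b:=w2) (c:=c2) (d:=x2) (f:=c3) (g:=x3) (h:=c4) (i:=r4)); sf
  | by apply: (cyc6 (a:=g) (b:=w3) (c:=c3) (d:=x3) (f:=c4) (g:=r4)); sf
  | by apply: (cyc10 (a:=g) (b:=r1) (c:=c1) (d:=x1) (f:=c2) (g:=x2) (h:=c3) (i:=x3) (j:=c4) (k:=r4)); sf
  | by rewrite eqxx in nyy' ].
have hbd : forall x y, e x y -> (x < N) && (y < N) by exact: (iv_bd IV).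
have hsym : forall x y, e x y = e y x by exact: mesym.
have hcol : forall x y, e x y -> col x != col y by exact: (iv_col IV).
have hT1 := T1m.
have hctr := iv_ctr IV.
set P := inC col c1 c2 c3 c4 x2 r1 w2 w3 r4.
have Cid : is_id_codeb (ord_rel N e) [set z : 'I_N | P (val z)].
  exact: (code_id hbd hsym hcol hT1 hctr k1 k2 k3 k4 E1 E2 E3 E4 E5 E6 E7 E8 E9 E10
     n12 n34 X1R X3R n1 n2 n3 n4 n5 n6 n7 hHi).
have gle : gammaID (ord_rel N e) <= #|[set z : 'I_N | P (val z)]|.
  by rewrite /gammaID; apply: bigmin_le_seq => //; exact: mem_index_enum.
rewrite card_count in gle.
set s := iota 0 N.
set A := predI (predC col) (predC (mem [:: x2; w2; w3; r1; r4])).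
set Zs := [:: c1; c2; c3; c4].
have hP : P =1 predU A (mem Zs) by [].
rewrite (eq_count hP) in gle.
have UI := count_predUI A (mem Zs) s.
have colZ : forall z, z \in Zs -> col z.
  by move=> z; rewrite !inE => /orP[/eqP->|/orP[/eqP->|/orP[/eqP->|/eqP->]]].
have h0 : count (predI A (mem Zs)) s = 0.
  rewrite (@eq_count _ _ pred0) ?count_pred0 // => z /=.
  by case hz: (z \in Zs); rewrite ?andbF // (colZ _ hz).
have hZ : count (mem Zs) s = 4.
  apply: count_mem_sub; first by clear -n12 b13 b14 n23 b24 n34; rewrite /Zs /= !inE; lia.
    exact: iota_uniq.
  move=> z; rewrite /s mem_iota add0n leq0n /= !inE.
  move=> /orP[/eqP->|/orP[/eqP->|/orP[/eqP->|/eqP->]]];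
    [exact: bnd _ _ E1|exact: bnd _ _ E2|exact: bnd _ _ E4|exact: bnd _ _ E6].
have hR : count (mem [:: x2; w2; w3; r1; r4]) (filter (predC col) s) = 5.
  apply: count_mem_sub.
  - by clear -nw22 nw32 x2r1 x2r4 d23 d2r1 d2r4 d3r1 d3r4 drr; rewrite /= !inE; lia.
  - exact: filter_uniq (iota_uniq _ _).
  - move=> z; rewrite mem_filter /s mem_iota add0n leq0n /= !inE.
    have kw2 := mcolF k2 E8. have kw3 := mcolF k3 E9.
    have kr1 := mcolF k1 E7. have kr4 := mcolF k4 E10.
    have bb : forall x y, e x y -> y < N by move=> x y /(iv_bd IV) /andP[].
    move=> /orP[/eqP->|/orP[/eqP->|/orP[/eqP->|/orP[/eqP->|/eqP->]]]].
    + by rewrite kx2 (bb _ _ E3).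
    + by rewrite kw2 (bb _ _ E8).
    + by rewrite kw3 (bb _ _ E9).
    + by rewrite kr1 (bb _ _ E7).
    + by rewrite kr4 (bb _ _ E10).
have hC := count_predC (mem [:: x2; w2; w3; r1; r4]) (filter (predC col) s).
rewrite size_filter in hC.
have hA : count (predC (mem [:: x2; w2; w3; r1; r4])) (filter (predC col) s) = count A s.
  by rewrite count_filter; apply: eq_count => z; rewrite /A /= andbC.
have gle' : gammaID (ord_rel N e) <= count (predU A (mem Zs)) s := gle.
have hc := count_predC col s.
have hs : size s = N by rewrite size_iota.
have hcm : count col s = m := iv_cnt IV.
have hN := iv_N IV.
have eU : count (predU A (mem Zs)) s = count A s + 4 by rewrite -hZ -UI h0 addn0.
move: hC; rewrite hA hR => hC.
rewrite eU in gle'.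
clear -gle' hC hc hs hcm hN. move: hc hs hcm hN hC gle'. set a := count A s. set b := count (predC col) s. set c := count col s. set g := gammaID _. set z := size s. move=> *. clearbody a b c g z. lia.
Qed.

End Main.

Lemma walk_root N e par col m (IV : Inv N e par col m) (r : 'I_N) : val r = 0 ->
  forall x : 'I_N, exists k, walk (ord_rel N e) k x r.
Proof.
move=> r0 x; move: {2}(val x) (leqnn (val x)) => k; elim: k x => [|k IH] x hx.
  by exists 0; rewrite /=; apply/eqP/val_inj; rewrite r0; apply/eqP; rewrite -leqn0.
case: (posnP (val x)) => [x0|xpos].
  by exists 0; rewrite /=; apply/eqP/val_inj; rewrite r0.
have hpx := iv_par IV xpos (ltn_ord x).
have hp : par x < N := ltn_trans hpx (ltn_ord x).
have [k' w] := IH (Ordinal hp) (leq_trans hpx hx).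
exists k'.+1; apply: (wstep (y:=Ordinal hp)) => //.
by rewrite /ord_rel /= (iv_adj IV) // xpos eqxx.
Qed.

Theorem mainTheorem16 (n : nat) (e : rel nat) :
  appended_star n e ->
  max_degree (ord_rel n e) = 3 ->
  8 <= diameter (ord_rel n e) ->
  3 * gammaID (ord_rel n e) <= 2 * n.
Proof.
move=> Happ Hmax Hdiam.
have [par [col [m IV]]] := inv_app Happ (degB_of (eq_leq Hmax)).
have n0 : 0 < n by rewrite (iv_N IV) addn1.
have osym : forall x y : 'I_n, ord_rel n e x y = ord_rel n e y x.
  by move=> x y; exact: (mesym IV).
have conn : forall x y : 'I_n, exists k, walk (ord_rel n e) k x y.
  move=> x y.
  have [k1 w1] := walk_root IV (r:=Ordinal n0) erefl x.
  have [k2 w2] := walk_root IV (r:=Ordinal n0) erefl y.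
  exists (k1 + k2); apply: walk_cat w1 _; exact: walk_sym osym _ _ _ w2.
have card0 : 0 < #|'I_n| by rewrite card_ord.
rewrite /diameter in Hdiam.
have [u Hu] := eq_bigmax (fun u : 'I_n => \max_(v : 'I_n) dist (ord_rel n e) u v) card0.
have [v Hv] := eq_bigmax (fun v : 'I_n => dist (ord_rel n e) u v) card0.
rewrite Hu /= Hv in Hdiam.
case: (ex_minnP (conn u v)) => L wL Lmin.
have L8 : 8 <= L.
  rewrite leqNgt; apply/negP => hL.
  have hdN : dist (ord_rel n e) u v <= #|'I_n| by rewrite /dist; exact: bigmin_le_def.
  have LT : L < #|'I_n| by lia.
  have : dist (ord_rel n e) u v <= L.
    rewrite /dist.
    exact: (bigmin_le_seq _ _ (mem_index_enum (Ordinal LT)) wL).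
  lia.
have w7 : walk (ord_rel n e) (7 + (L - 7)) u v by rewrite subnKC //; lia.
have [y7 [W7 Wr]] := walk_split w7.
have [y1 a1 W6] := wstepP W7. have [y2 a2 W5] := wstepP W6.
have [y3 a3 W4] := wstepP W5. have [y4 a4 W3] := wstepP W4.
have [y5 a5 W2] := wstepP W3. have [y6 a6 W1] := wstepP W2.
have [y7' a7 W0] := wstepP W1.
move/eqP: W0 => ey7; subst y7'.
have nb0 : u != y2.
  apply/eqP => h; subst y2.
  have := Lmin _ (wstep a3 (wstep a4 (wstep a5 (wstep a6 (wstep a7 Wr))))).
  by move=> H; clear -H L8; lia.
have nb1 : y1 != y3.
  apply/eqP => h; subst y3.
  have := Lmin _ (wstep a1 (wstep a4 (wstep a5 (wstep a6 (wstep a7 Wr))))).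
  by move=> H; clear -H L8; lia.
have nb2 : y2 != y4.
  apply/eqP => h; subst y4.
  have := Lmin _ (wstep a1 (wstep a2 (wstep a5 (wstep a6 (wstep a7 Wr))))).
  by move=> H; clear -H L8; lia.
have nb3 : y3 != y5.
  apply/eqP => h; subst y5.
  have := Lmin _ (wstep a1 (wstep a2 (wstep a3 (wstep a6 (wstep a7 Wr))))).
  by move=> H; clear -H L8; lia.
have nb4 : y4 != y6.
  apply/eqP => h; subst y6.
  have := Lmin _ (wstep a1 (wstep a2 (wstep a3 (wstep a4 (wstep a7 Wr))))).
  by move=> H; clear -H L8; lia.
have nb5 : y5 != y7.
  apply/eqP => h; subst y7.
  have := Lmin _ (wstep a1 (wstep a2 (wstep a3 (wstep a4 (wstep a5 Wr))))).
  by move=> H; clear -H L8; lia.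
case ku: (col (val u)).
  exact: (pattern_bound IV ku a1 a2 a3 a4 a5 a6 nb0 nb1 nb2 nb3 nb4).
have k1 : col (val y1) := mcolT IV ku a1.
exact: (pattern_bound IV k1 a2 a3 a4 a5 a6 a7 nb1 nb2 nb3 nb4 nb5).
Qed.
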